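(* Let $\mathbf{A}$ be a (left and right) Noetherian domain. Then the following three conditions are equivalent: (i) every left ideal and every right ideal of $\mathbf{A}$ is stably free; (ii) every finitely generated torsion-free (left or right) $\mathbf{A}$-module is stably free; (iii) every finitely generated left ideal and every finitely generated right ideal of $\mathbf{A}$ is stably free.
   Context: Rings are associative with $1$, not necessarily commutative. A domain is a nonzero ring without zero divisors. A module $P$ over $\mathbf{A}$ is stably free if there exist integers $q\ge 0$, $r\ge 0$ with $P\oplus \mathbf{A}^{q}\cong \mathbf{A}^{q+r}$. A module $M$ over a domain is torsion-free if $am=0$ with $a\neq 0$ implies $m=0$. A Noetherian domain satisfying these equivalent conditions is called a stably free ideal domain. *)

(* Defs.v *)
From HB Require Import structures.
From mathcomp Require Import all_boot all_order all_algebra.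
Set Implicit Arguments. Unset Strict Implicit. Unset Printing Implicit Defensive.
Import GRing.Theory.
Local Open Scope ring_scope.

Definition is_domain (R : nzRingType) : Prop :=
  forall a b : R, a * b = 0 -> a = 0 \/ b = 0.

Definition is_submod (R : nzRingType) (M : lmodType R) (S : {pred M}) : Prop :=
  0 \in S /\ (forall x y, x \in S -> y \in S -> x + y \in S) /\
  (forall (a : R) x, x \in S -> a *: x \in S).

Definition fg_sub (R : nzRingType) (M : lmodType R) (S : {pred M}) : Prop :=
  exists s : seq M, forall x : M,
    x \in S <-> exists c : 'I_(size s) -> R, x = \sum_(i < size s) c i *: s`_i.

Definition fg_module (R : nzRingType) (M : lmodType R) : Prop :=
  fg_sub (M := M) predT.

Definition torsion_free (R : nzRingType) (M : lmodType R) : Prop :=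
  forall (a : R) (m : M), a != 0 -> a *: m = 0 -> m = 0.

(* The submodule S of M is stably free: there are q, r and an R-linear
   isomorphism S (+) R^q ~= R^(q+r), given by (x, v) |-> phi x + psi v
   with phi : S -> R^(q+r) and psi : R^q -> R^(q+r) R-linear. *)
Definition stably_free_sub (R : nzRingType) (M : lmodType R) (S : {pred M}) : Prop :=
  exists (q r : nat) (phi : M -> 'rV[R]_(q + r)) (psi : 'rV[R]_q -> 'rV[R]_(q + r)),
    (forall (a : R) x y, x \in S -> y \in S -> phi (a *: x + y) = a *: phi x + phi y) /\
    (forall (a : R) u v, psi (a *: u + v) = a *: psi u + psi v) /\
    (forall x x' v v', x \in S -> x' \in S ->
        phi x + psi v = phi x' + psi v' -> x = x' /\ v = v') /\
    (forall w, exists x v, x \in S /\ phi x + psi v = w).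

Definition stably_free (R : nzRingType) (M : lmodType R) : Prop :=
  stably_free_sub (M := M) predT.

(* Left ideals of R = submodules of the regular left module R^o;
   right ideals of R = left ideals of the converse ring R^c;
   right R-modules = left R^c-modules. *)
Definition is_left_ideal (R : nzRingType) (I : {pred R^o}) : Prop := is_submod I.
Definition is_right_ideal (R : nzRingType) (I : {pred (R^c)^o}) : Prop := is_submod I.

Definition left_noetherian (R : nzRingType) : Prop :=
  forall I : {pred R^o}, is_left_ideal I -> fg_sub I.
Definition right_noetherian (R : nzRingType) : Prop :=
  forall I : {pred (R^c)^o}, is_right_ideal I -> fg_sub I.

(* Main.v *)
From HB Require Import structures.
Require Import Defs.
From mathcomp Require Import all_boot all_order all_algebra.
From Stdlib Require Import ClassicalEpsilon Classical.
Set Implicit Arguments. Unset Strict Implicit. Unset Printing Implicit Defensive.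
Import GRing.Theory.
Local Open Scope ring_scope.


Lemma choice_fun (A B : Type) (P : A -> B -> Prop) :
  (forall a, exists b, P a b) -> exists f : A -> B, forall a, P a (f a).
Proof.
move=> H; exists (fun a => proj1_sig (constructive_indefinite_description _ (H a))).
by move=> a; case: (constructive_indefinite_description _ (H a)).
Qed.

Definition pb (P : Prop) : bool := if excluded_middle_informative P then true else false.
Lemma pbP (P : Prop) : pb P <-> P.
Proof. by rewrite /pb; case: excluded_middle_informative. Qed.

Lemma sum_cast (V : nmodType) n m (e : n = m) (F : 'I_m -> V) :
  \sum_(i < n) F (cast_ord e i) = \sum_(i < m) F i.
Proof. by case: m / e F => F; apply: eq_bigr => i _; rewrite cast_ord_id. Qed.

Section Lin.
Variables (R : nzRingType) (M N : lmodType R).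

Definition linS (S : {pred M}) (f : M -> N) :=
  forall (a : R) x y, x \in S -> y \in S -> f (a *: x + y) = a *: f x + f y.

Lemma linS0 (S : {pred M}) f : linS S f -> 0 \in S -> f 0 = 0.
Proof.
move=> H S0; have := H 1 0 0 S0 S0; rewrite !scale1r addr0 => e.
by apply: (@addrI _ (f 0)); rewrite addr0 -e.
Qed.

Lemma linSD (S : {pred M}) f : linS S f -> forall x y, x \in S -> y \in S -> f (x + y) = f x + f y.
Proof. by move=> H x y xS yS; rewrite -[x in LHS]scale1r H // scale1r. Qed.

Definition linT (f : M -> N) := forall (a : R) x y, f (a *: x + y) = a *: f x + f y.

Lemma linT_S (S : {pred M}) f : linT f -> linS S f.
Proof. by move=> H a x y _ _; apply: H. Qed.

Lemma linT0 f : linT f -> f 0 = 0.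
Proof. move=> H; apply: (@linS0 predT) => //; exact: linT_S. Qed.
Lemma linTD f : linT f -> forall x y, f (x + y) = f x + f y.
Proof. by move=> H x y; rewrite -[x in LHS]scale1r H scale1r. Qed.
Lemma linTZ f : linT f -> forall a x, f (a *: x) = a *: f x.
Proof. by move=> H a x; rewrite -[a *: x]addr0 H linT0 // addr0. Qed.
Lemma linTN f : linT f -> forall x, f (- x) = - f x.
Proof. by move=> H x; rewrite -scaleN1r linTZ // scaleN1r. Qed.
Lemma linTB f : linT f -> forall x y, f (x - y) = f x - f y.
Proof. by move=> H x y; rewrite linTD // linTN. Qed.
Lemma linT_sum f : linT f -> forall I (r : seq I) P (F : I -> M),
  f (\sum_(i <- r | P i) F i) = \sum_(i <- r | P i) f (F i).
Proof.
move=> H I r P F; elim/big_rec2: _ => [|i y1 y2 _ <-]; first exact: linT0.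
by rewrite linTD.
Qed.
End Lin.

Section Sub.
Variables (R : nzRingType) (M : lmodType R).
Lemma submod_sum (S : {pred M}) : is_submod S ->
  forall I (r : seq I) (P : pred I) (F : I -> M), (forall i, P i -> F i \in S) ->
  \sum_(i <- r | P i) F i \in S.
Proof.
case=> S0 [SD SZ] I r P F H; elim/big_rec: _ => // i x Pi xS; exact: SD (H _ Pi) xS.
Qed.
Lemma submodN (S : {pred M}) : is_submod S -> forall x, x \in S -> - x \in S.
Proof. by case=> S0 [SD SZ] x xS; rewrite -scaleN1r SZ. Qed.
Lemma submodB (S : {pred M}) : is_submod S -> forall x y, x \in S -> y \in S -> x - y \in S.
Proof. move=> hS x y xS yS; case: (hS) => S0 [SD SZ]; exact: SD xS (submodN hS yS). Qed.
End Sub.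
Lemma submod_sumT (R : nzRingType) (M : lmodType R) (S : {pred M}) : is_submod S ->
  forall I (r : seq I) (F : I -> M), (forall i, F i \in S) ->
  \sum_(i <- r) F i \in S.
Proof.
case=> S0 [SD SZ] I r F H; elim/big_rec: _ => // i x _ xS; exact: SD (H _) xS.
Qed.
Lemma submod_sumF (R : nzRingType) (M : lmodType R) (S : {pred M}) : is_submod S ->
  forall (I : finType) (F : I -> M), (forall i, F i \in S) ->
  \sum_i F i \in S.
Proof.
case=> S0 [SD SZ] I F H; elim/big_rec: _ => // i x _ xS; exact: SD (H _) xS.
Qed.


Section SF.
Variable R : nzRingType.

Definition SFg (M : lmodType R) (S : {pred M}) :=
  exists q n (phi : M -> 'rV[R]_n) (psi : 'rV[R]_q -> 'rV[R]_n),
    (q <= n)%N /\ linS S phi /\ linT psi /\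
    (forall x x' v v', x \in S -> x' \in S ->
        phi x + psi v = phi x' + psi v' -> x = x' /\ v = v') /\
    (forall w, exists x v, x \in S /\ phi x + psi v = w).

Lemma castmx_lin m n m' n' (e : (m = m') * (n = n')) (a : R) (A B : 'M[R]_(m, n)) :
  castmx e (a *: A + B) = a *: castmx e A + castmx e B.
Proof. by apply/matrixP => i j; rewrite !castmxE !mxE !castmxE. Qed.

Lemma castmxD m n m' n' (e : (m = m') * (n = n')) (A B : 'M[R]_(m, n)) :
  castmx e (A + B) = castmx e A + castmx e B.
Proof. by rewrite -[A]scale1r castmx_lin !scale1r. Qed.

Lemma SFg_SF (M : lmodType R) (S : {pred M}) : SFg S -> stably_free_sub S.
Proof.
case=> q [n [phi [psi [hq [lphi [lpsi [inj sur]]]]]]].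
have e : n = (q + (n - q))%N by rewrite subnKC.
exists q, (n - q)%N, (fun x => castmx (erefl 1%N, e) (phi x)),
  (fun v => castmx (erefl 1%N, e) (psi v)).
split; first by move=> a x y xS yS; rewrite lphi // castmx_lin.
split; first by move=> a u v; rewrite lpsi castmx_lin.
split.
  move=> x x' v v' xS x'S; rewrite -!castmxD => /(congr1 (castmx (esym (erefl 1%N), esym e))).
  by rewrite !castmxK; apply: inj.
move=> w; have [x [v [xS xv]]] := sur (castmx (esym (erefl 1%N), esym e) w).
by exists x, v; split => //; rewrite -castmxD xv castmxKV.
Qed.

Lemma SF_SFg (M : lmodType R) (S : {pred M}) : stably_free_sub S -> SFg S.
Proof.
case=> q [r [phi [psi [lphi [lpsi [inj sur]]]]]].
by exists q, (q + r)%N, phi, psi; split; first exact: leq_addr.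
Qed.

Lemma SFg_transport (M M' : lmodType R) (S : {pred M}) (S' : {pred M'}) (g : M -> M') :
  linS S g -> (forall x, x \in S -> g x \in S') ->
  (forall x y, x \in S -> y \in S -> g x = g y -> x = y) ->
  (forall y, y \in S' -> exists x, x \in S /\ g x = y) ->
  SFg S' -> SFg S.
Proof.
move=> lg gS ginj gsur [q [n [phi [psi [hq [lphi [lpsi [inj sur]]]]]]]].
exists q, n, (fun x => phi (g x)), psi; split => //; split.
  by move=> a x y xS yS; rewrite lg // lphi // gS.
split => //; split.
  move=> x x' v v' xS x'S e.
  have [gx ->] := inj _ _ _ _ (gS _ xS) (gS _ x'S) e.
  by split => //; apply: ginj.
move=> w; have [y [v [yS yv]]] := sur w; have [x [xS gx]] := gsur y yS.
by exists x, v; rewrite gx.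
Qed.
End SF.


Lemma linS_sum (R : nzRingType) (M V : lmodType R) (S : {pred M}) (f : M -> V) : is_submod S -> linS S f ->
  forall I (r : seq I) (c : I -> R) (F : I -> M), (forall i, F i \in S) ->
  f (\sum_(i <- r) c i *: F i) = \sum_(i <- r) c i *: f (F i).
Proof.
move=> hS lf I r c F FS; case: (hS) => S0 [SD SZ].
elim: r => [|i r IH]; first by rewrite !big_nil (linS0 lf).
rewrite !big_cons lf ?IH //; last by apply: (submod_sumT hS) => j; apply: SZ.
Qed.


Section Ext.
Variables (R : nzRingType) (M N : lmodType R).

Lemma lsubmx_lin n1 n2 (a : R) (A B : 'rV[R]_(n1 + n2)) :
  lsubmx (a *: A + B) = a *: lsubmx A + lsubmx B.
Proof. by apply/matrixP => i j; rewrite !mxE. Qed.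
Lemma rsubmx_lin n1 n2 (a : R) (A B : 'rV[R]_(n1 + n2)) :
  rsubmx (a *: A + B) = a *: rsubmx A + rsubmx B.
Proof. by apply/matrixP => i j; rewrite !mxE. Qed.

Variables (p : M -> N) (S : {pred M}) (I : {pred N}).
Hypotheses (lp : linT p) (hS : is_submod S) (hI : is_submod I)
  (pS : forall x, x \in S -> p x \in I)
  (psur : forall y, y \in I -> exists x, x \in S /\ p x = y).

Lemma splitting : SFg I -> exists s : N -> M,
  linS I s /\ (forall y, y \in I -> s y \in S) /\ (forall y, y \in I -> p (s y) = y).
Proof.
case=> q [n [phi [psi [hq [lphi [lpsi [inj sur]]]]]]].
have [XV hXV] : exists XV : 'I_n -> N * 'rV[R]_q, forall j,
    (XV j).1 \in I /\ phi (XV j).1 + psi (XV j).2 = delta_mx 0 j.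
  apply: (@choice_fun _ _ (fun j (xv : N * 'rV[R]_q) =>
    xv.1 \in I /\ phi xv.1 + psi xv.2 = delta_mx 0 j)) => j; have [x [v [xI e]]] := sur (delta_mx 0 j).
  by exists (x, v).
pose X j := (XV j).1; pose V j := (XV j).2.
have XI j : X j \in I by case: (hXV j).
have XV1 j : phi (X j) + psi (V j) = delta_mx 0 j by case: (hXV j).
have [Z hZ] := choice_fun (fun j : 'I_n => psur (XI j)).
case: (hS) => S0 [SD SZ].
exists (fun y => \sum_(j < n) phi y 0 j *: Z j); split.
  move=> a y y' yI y'I; rewrite lphi //.
  under eq_bigr do rewrite !mxE scalerDl -scalerA.
  by rewrite big_split /= -scaler_sumr.
split; first by move=> y yI /=; apply: (submod_sumF hS) => j; apply: SZ; case: (hZ j).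
move=> y yI; rewrite linT_sum //.
under eq_bigr => j _ do rewrite linTZ // (proj2 (hZ j)).
set y1 := \sum_(j < n) _.
have y1I : y1 \in I by apply: (submod_sumF hI) => j; case: hI => _ [_]; apply.
have e : phi y1 + psi (\sum_(j < n) phi y 0 j *: V j) = phi y + psi 0.
  rewrite /y1 (linS_sum hI) // linT_sum //.
  under [X in _ + X]eq_bigr do rewrite linTZ //.
  rewrite -big_split /= (linT0 lpsi) addr0 [RHS]row_sum_delta.
  by apply: eq_bigr => j _; rewrite -scalerDr XV1.
by have [] := inj _ _ _ _ y1I yI e.
Qed.

Definition Kp : {pred M} := [pred x | (x \in S) && (p x == 0)].

Lemma SFg_ext : SFg I -> SFg Kp -> SFg S.
Proof.
move=> sfI sfK; have [s [ls [sS ps]]] := splitting sfI.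
case: sfI => qI [nI [phI [psI [hqI [lphI [lpsI [injI surI]]]]]]].
case: sfK => qK [nK [phK [psK [hqK [lphK [lpsK [injK surK]]]]]]].
case: (hS) => S0 [SD SZ].
have kK x : x \in S -> x - s (p x) \in Kp.
  move=> xS; rewrite inE; apply/andP; split; first by apply: (submodB hS) => //; apply: sS; apply: pS.
  by rewrite (linTB lp) ps ?subrr // pS.
exists (qK + qI)%N, (nK + nI)%N,
  (fun x => row_mx (phK (x - s (p x))) (phI (p x))),
  (fun v => row_mx (psK (lsubmx v)) (psI (rsubmx v))).
split; first exact: leq_add.
split.
  move=> a x y xS yS /=.
  have -> : a *: x + y - s (p (a *: x + y)) = a *: (x - s (p x)) + (y - s (p y)).
    rewrite lp ls ?pS // scalerBr opprD !addrA; congr (_ + _); by rewrite addrAC.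
  by rewrite lphK ?kK // lp lphI ?pS // scale_row_mx add_row_mx.
split.
  by move=> a u v; rewrite lsubmx_lin rsubmx_lin lpsK lpsI scale_row_mx add_row_mx.
split.
  move=> x x' v v' xS x'S; rewrite !add_row_mx => /eq_row_mx [eK eI].
  have [ep ev2] := injI _ _ _ _ (pS xS) (pS x'S) eI.
  have [ex ev1] := injK _ _ _ _ (kK _ xS) (kK _ x'S) eK.
  split; last by rewrite -[v]hsubmxK -[v']hsubmxK ev1 ev2.
  by move: ex; rewrite ep => /addIr.
move=> w; have [k [vK [kKp ek]]] := surK (lsubmx w).
have [y [vI [yI ey]]] := surI (rsubmx w).
move: kKp; rewrite inE => /andP [kS /eqP pk].
have xS : k + s y \in S by apply: SD => //; apply: sS.
have px : p (k + s y) = y by rewrite (linTD lp) pk add0r ps.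
exists (k + s y), (row_mx vK vI); split => //.
rewrite px addrK row_mxKl row_mxKr add_row_mx ek ey; exact: hsubmxK.
Qed.
End Ext.


Section RV.
Variable R : nzRingType.

Lemma scale_regE4 (a x : R^o) : a *: x = a * x.
Proof. by []. Qed.

Definition trunc n (v : 'rV[R]_n.+1) : 'rV[R]_n := \row_i v 0 (lift ord_max i).
Definition ext n (u : 'rV[R]_n) : 'rV[R]_n.+1 :=
  \row_j oapp (fun i => u 0 i) 0 (unlift ord_max j).

Lemma truncK n (u : 'rV[R]_n) : trunc (ext u) = u.
Proof. by apply/matrixP => i j; rewrite !mxE liftK /= (ord1 i). Qed.
Lemma extK n (v : 'rV[R]_n.+1) : v 0 ord_max = 0 -> ext (trunc v) = v.
Proof.
move=> v0; apply/matrixP => i j; rewrite !mxE (ord1 i).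
by case: unliftP => [k ->|->] /=; rewrite ?mxE.
Qed.
Lemma ext_max n (u : 'rV[R]_n) : ext u 0 ord_max = 0.
Proof. by rewrite mxE unlift_none. Qed.
Lemma ext_lin n : linT (@ext n).
Proof.
move=> a u v; apply/matrixP => i j; rewrite !mxE.
by case: unliftP => [k _|_] /=; rewrite ?mxE // mulr0 addr0.
Qed.
Lemma trunc_lin n : linT (@trunc n).
Proof. by move=> a u v; apply/matrixP => i j; rewrite !mxE. Qed.

Hypothesis H : forall I : {pred R^o}, is_left_ideal I -> SFg I.

Lemma rV_SF n (S : {pred 'rV[R]_n}) : is_submod S -> SFg S.
Proof.
elim: n S => [|n IH] S hS.
  case: (hS) => S0 _.
  exists 0%N, 0%N, (fun _ => 0), (fun _ => 0); split => //; split.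
    by move=> *; rewrite scaler0 addr0.
  split; first by move=> *; rewrite scaler0 addr0.
  split; first by move=> x x' v v' _ _ _; split; apply/matrixP => i [].

  by move=> w; exists 0, 0; split => //; apply/matrixP => i [].
pose p (v : 'rV[R]_n.+1) : R^o := v 0 ord_max.
have lp : linT p by move=> a u v; rewrite /p !mxE.
pose I : {pred R^o} := [pred y | pb (exists x, x \in S /\ p x = y)].
have pS x : x \in S -> p x \in I by move=> xS; rewrite inE; apply/pbP; exists x.
have psur y : y \in I -> exists x, x \in S /\ p x = y by rewrite inE => /pbP.
case: (hS) => S0 [SD SZ].
have hI : is_submod I.
  split; first by rewrite -(linT0 lp); apply: pS.
  split.
    move=> y y' /psur [x [xS <-]] /psur [x' [x'S <-]].
    by rewrite -(linTD lp); apply: pS; apply: SD.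
  by move=> a y /psur [x [xS <-]]; rewrite -(linTZ lp); apply: pS; apply: SZ.
apply: (SFg_ext lp hS hI pS psur (H hI)).
pose K' : {pred 'rV[R]_n} := [pred u | ext u \in S].
have hK' : is_submod K'.
  split; first by rewrite inE (linT0 (@ext_lin n)).
  split; first by move=> u v; rewrite !inE (linTD (@ext_lin n)); apply: SD.
  by move=> a u; rewrite !inE (linTZ (@ext_lin n)); apply: SZ.
apply: (SFg_transport (g := @trunc n) _ _ _ _ (IH K' hK')).
- exact: linT_S (@trunc_lin n).
- by move=> x; rewrite inE => /andP [xS /eqP px]; rewrite inE extK.
- move=> x y; rewrite !inE => /andP [_ /eqP px] /andP [_ /eqP py] e.
  by rewrite -(extK px) -(extK py) e.
- move=> u; rewrite inE => uS; exists (ext u); rewrite truncK; split => //.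
  by rewrite inE uS /p ext_max eqxx.
Qed.
End RV.


Definition ore_l (R : nzRingType) := forall a b : R, a != 0 -> b != 0 ->
  exists u v : R, u * a = v * b /\ u * a != 0.
Definition ore_r (R : nzRingType) := forall a b : R, a != 0 -> b != 0 ->
  exists u v : R, a * u = b * v /\ a * u != 0.

Lemma scale_regE (R : nzRingType) (a x : R^o) : a *: x = a * x.
Proof. by []. Qed.

Section Ore.
Variable R : nzRingType.
Hypothesis hdom : is_domain R.

Lemma dom_neq0 (a b : R) : a != 0 -> b != 0 -> a * b != 0.
Proof. by move=> ha hb; apply/eqP => /hdom [] /eqP; [rewrite (negbTE ha)|rewrite (negbTE hb)]. Qed.

Lemma dom_cancel_r (a x y : R) : a != 0 -> x * a = y * a -> x = y.
Proof.
move=> ha e; have : (x - y) * a = 0 by rewrite mulrBl e subrr.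
by case/hdom => [/eqP|/eqP]; [rewrite subr_eq0 => /eqP|rewrite (negbTE ha)].
Qed.
Lemma dom_cancel_l (a x y : R) : a != 0 -> a * x = a * y -> x = y.
Proof.
move=> ha e; have : a * (x - y) = 0 by rewrite mulrBr e subrr.
by case/hdom => [/eqP|/eqP]; [rewrite (negbTE ha)|rewrite subr_eq0 => /eqP].
Qed.

Lemma ore_cancel (a b : R) : a != 0 -> b != 0 ->
  (forall u v : R, u * a = v * b -> u * a = 0) ->
  forall n (r : nat -> R), \sum_(0 <= i < n) r i * (b * a ^+ i) != b * a ^+ n.
Proof.
move=> ha hb H0 n; elim: n => [|n IH] r.
  by rewrite big_geq // expr0 mulr1 eq_sym.
rewrite big_nat_recl // expr0 mulr1.
under eq_bigr do rewrite exprSr mulrA mulrA.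
rewrite -big_distrl /= exprSr mulrA; apply/eqP => e.
set T := \sum_(0 <= i < n) _ in e.
have e2 : (b * a ^+ n - T) * a = r 0%N * b by rewrite mulrBl -e addrK.
have := H0 _ _ e2; move=> /hdom [] /eqP; last by rewrite (negbTE ha).
rewrite subr_eq0 => /eqP eT.
have : \sum_(0 <= i < n) r i.+1 * (b * a ^+ i) == b * a ^+ n.
  by rewrite eT /T; apply/eqP; apply: eq_bigr => i _; rewrite mulrA.
by rewrite (negbTE (IH _)).
Qed.

Lemma pad_sum n N (r : nat -> R) (c : nat -> R) : (n <= N)%N ->
  \sum_(0 <= i < n) r i * c i =
  \sum_(0 <= i < N) (if (i < n)%N then r i else 0) * c i.
Proof.
move=> le; rewrite [RHS](@big_cat_nat _ _ _ n) //=.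
rewrite [X in _ = _ + X]big1_seq ?addr0; last first.
  move=> i /andP [_]; rewrite mem_index_iota => /andP [le_ni _].
  by rewrite (leq_gtF le_ni) mul0r.
apply: eq_big_seq => i; rewrite mem_index_iota => /andP [_ ->] //.
Qed.

Hypothesis hlN : left_noetherian R.

Lemma noeth_ore : ore_l R.
Proof.
move=> a b ha hb.
case: (excluded_middle_informative (exists u v : R, u * a = v * b /\ u * a != 0)) => // hn.
exfalso.
have H0 : forall u v : R, u * a = v * b -> u * a = 0.
  move=> u v e; case: (eqVneq (u * a) 0) => // hne; case: hn; by exists u, v.
pose J : {pred R^o} := [pred x | pb (exists n (r : nat -> R),
  x = \sum_(0 <= i < n) r i * (b * a ^+ i))].
have JP x : x \in J <-> exists n (r : nat -> R), x = \sum_(0 <= i < n) r i * (b * a ^+ i).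
  by rewrite inE; apply: pbP.
have hJ : is_left_ideal J.
  split; first by apply/JP; exists 0%N, (fun _ => 0); rewrite big_geq.
  split.
    move=> x y /JP [n [r ->]] /JP [m [s ->]]; apply/JP.
    exists (maxn n m), (fun i => (if (i < n)%N then r i else 0) + (if (i < m)%N then s i else 0)).
    rewrite (pad_sum _ _ (leq_maxl n m)) (pad_sum _ _ (leq_maxr n m)) -big_split /=.
    by apply: eq_bigr => i _; rewrite mulrDl.
  move=> c x /JP [n [r ->]]; apply/JP; exists n, (fun i => c * r i).
  rewrite (_ : forall y : R^o, c *: y = c * y) // mulr_sumr.
  by apply: eq_bigr => i _; rewrite mulrA.
have [s hs] := hlN hJ.
have sJ k : (k < size s)%N -> s`_k \in J.
  move=> lt; apply/hs; exists (fun j : 'I_(size s) => ((j : nat) == k)%:R).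
  rewrite (bigD1 (Ordinal lt)) //= eqxx scale1r big1 ?addr0 //.
  by move=> j /eqP ne; rewrite (_ : ((j : nat) == k) = false) ?scale0r //; apply/eqP => e; apply: ne; apply: val_inj.
have [NR hNR] : exists NR : 'I_(size s) -> nat * (nat -> R), forall k : 'I_(size s),
    s`_k = \sum_(0 <= i < (NR k).1) (NR k).2 i * (b * a ^+ i).
  apply: (@choice_fun _ _ (fun (k : 'I_(size s)) (nr : nat * (nat -> R)) =>
     s`_k = \sum_(0 <= i < nr.1) nr.2 i * (b * a ^+ i))) => k.
  by have /JP [n [r e]] := sJ k (ltn_ord k); exists (n, r).
pose N := (\max_(k < size s) (NR k).1)%N.
have hk (k : 'I_(size s)) : s`_k = \sum_(0 <= i < N)
    (if (i < (NR k).1)%N then (NR k).2 i else 0) * (b * a ^+ i).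
  by rewrite hNR; apply: pad_sum; exact: (@leq_bigmax _ (fun k => (NR k).1)).
have : b * a ^+ N \in J.
  apply/JP; exists N.+1, (fun i => (i == N)%:R).
  rewrite big_nat_recr //= eqxx mul1r big1_seq ?add0r // => i.
  by rewrite mem_index_iota => /andP [_ /ltn_eqF ->]; rewrite mul0r.
case/hs => c ec.
have := ore_cancel ha hb H0 N
  (fun i => \sum_(k < size s) c k * (if (i < (NR k).1)%N then (NR k).2 i else 0)).
rewrite ec => /negP H1; apply: H1; apply/eqP.
transitivity (\sum_(k < size s) \sum_(0 <= i < N)
   c k * ((if (i < (NR k).1)%N then (NR k).2 i else 0) * (b * a ^+ i))).
  rewrite exchange_big /=; apply: eq_bigr => i _; rewrite mulr_suml.
  by apply: eq_bigr => k _; rewrite -mulrA.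
apply: eq_bigr => k _; rewrite [in RHS]hk scale_regE mulr_sumr. by [].
Qed.
End Ore.


Section Emb.
Variable R : nzRingType.
Hypotheses (hdom : is_domain R) (ol : ore_l R) (or : ore_r R).

Lemma rcm (X : finType) (A B : X -> R) : (forall x, A x != 0) ->
  exists c, c != 0 /\ forall x, exists w, B x * c = A x * w.
Proof.
move=> hA.
have key : forall l : seq X, exists c, c != 0 /\
    forall x, x \in l -> exists w, B x * c = A x * w; last first.
  have [c [hc H]] := key (enum X).
  by exists c; split => // x; apply: H; rewrite mem_enum.
elim=> [|x l [c [hc IH]]]; first by exists 1; split => //; apply: oner_neq0.
case: (eqVneq (B x * c) 0) => h.
  exists c; split => // y; rewrite inE => /orP [/eqP ->|yl]; last exact: IH.
  by exists 0; rewrite h mulr0.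
have [u [v [e ne]]] := or (hA x) h.
have hv : v != 0 by apply: contraNneq ne => v0; rewrite e v0 mulr0.
exists (c * v); split; first exact: dom_neq0.
move=> y; rewrite inE => /orP [/eqP ->|yl].
  by exists u; rewrite mulrA e.
have [w ew] := IH y yl; exists (w * v); by rewrite mulrA ew mulrA.
Qed.

Variable M : lmodType R.
Hypothesis htf : torsion_free M.

Definition indep (E : seq M) := forall u : 'I_(size E) -> R,
  \sum_(i < size E) u i *: E`_i = 0 -> forall i, u i = 0.

Lemma indep_step (t : seq M) : exists E, indep E /\ forall g, g \in t ->
  exists a (u : 'I_(size E) -> R), a != 0 /\ a *: g = \sum_(i < size E) u i *: E`_i.
Proof.
elim: t => [|g t [E [iE hE]]].
  by exists [::]; split => // u _ [].
case: (classic (indep (g :: E))) => hi.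
  exists (g :: E); split => // h; rewrite inE => /orP [/eqP ->|ht].
    exists 1, (fun i : 'I_(size E).+1 => ((i : nat) == 0%N)%:R); split; first exact: oner_neq0.
    rewrite big_ord_recl /= scale1r big1 ?addr0 // => i _.
    by rewrite scale0r.
  have [a [u [ha e]]] := hE h ht.
  exists a, (fun i => oapp u 0 (unlift ord0 i)); split => //.
  rewrite big_ord_recl unlift_none scale0r add0r e.
  by apply: eq_bigr => i _; rewrite liftK /= add0n.
have [u hu] : exists u : 'I_(size E).+1 -> R,
    \sum_(i < (size E).+1) u i *: (g :: E)`_i = 0 /\ exists i, u i != 0.
  apply: NNPP => hn; apply: hi => u su i; apply/eqP; apply: negbNE; apply/negP => ne.
  by apply: hn; exists u; split => //; exists i.
case: hu => su [i0 hi0].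
move: su; rewrite big_ord_recl => su.
have hg : u ord0 != 0.
  apply/eqP => u0; move: su; rewrite u0 scale0r add0r => su.
  have H : forall j, u (lift ord0 j) = 0.
    by apply: iE; rewrite -[RHS]su; apply: eq_bigr => i _ /=; rewrite add0n.
  by move: hi0; case: (unliftP ord0 i0) => [j ->|->]; rewrite ?H ?u0 eqxx.
exists E; split => // h; rewrite inE => /orP [/eqP ->|ht]; last exact: hE.
exists (u ord0), (fun i => - u (lift ord0 i)); split => //.
move/eqP: su; rewrite addr_eq0 => /eqP ->; rewrite -sumrN.
by apply: eq_bigr => i _; rewrite scaleNr lift0.
Qed.

Lemma indep_eq E : indep E -> forall u u' : 'I_(size E) -> R,
  \sum_(i < size E) u i *: E`_i = \sum_(i < size E) u' i *: E`_i -> forall i, u i = u' i.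
Proof.
move=> iE u u' e i; apply/eqP; rewrite -subr_eq0; apply/eqP.
apply: (iE (fun i => u i - u' i)).
by under eq_bigr do rewrite scalerBl; rewrite sumrB e subrr.
Qed.

Definition Good (E : seq M) (c : R) (m : M) (y : 'rV[R]_(size E)) :=
  exists (a : R) (u : 'I_(size E) -> R), a != 0 /\ a *: m = (\sum_(i < size E) u i *: E`_i) /\
    forall i, a * y 0 i = u i * c.
Arguments Good : clear implicits.

Section G.
Variables (E : seq M) (c : R).

Lemma Good0 : Good E c 0 0.
Proof.
exists 1, (fun _ => 0); split; first exact: oner_neq0.
split; first by rewrite scaler0 big1 // => i _; rewrite scale0r.
by move=> i; rewrite mxE mulr0 mul0r.
Qed.

Lemma GoodD m m' y y' : Good E c m y -> Good E c m' y' -> Good E c (m + m') (y + y').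
Proof.
move=> [a [u [ha [em ey]]]] [a' [u' [ha' [em' ey']]]].
have [s [t [e ne]]] := ol ha ha'.
exists (s * a), (fun i => s * u i + t * u' i); split => //; split.
  rewrite scalerDr {2}e -!scalerA em em' !scaler_sumr -big_split /=.
  by apply: eq_bigr => i _; rewrite !scalerA scalerDl.
move=> i; rewrite mxE mulrDr {2}e -!mulrA ey ey' !mulrA mulrDl.
by [].
Qed.

Lemma GoodZ r m y : Good E c m y -> Good E c (r *: m) (r *: y).
Proof.
move=> [a [u [ha [em ey]]]].
case: (eqVneq r 0) => [->|hr]; first by rewrite !scale0r; apply: Good0.
have [s [t [e ne]]] := ol ha hr.
have ht : t != 0 by apply: contraNneq ne => t0; rewrite e t0 mul0r.
exists t, (fun i => s * u i); split => //; split.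
  by rewrite scalerA -e -scalerA em scaler_sumr; apply: eq_bigr => i _; rewrite scalerA.
by move=> i; rewrite mxE mulrA -e -mulrA ey mulrA.
Qed.

Lemma Good_uniq m y y' : indep E -> Good E c m y -> Good E c m y' -> y = y'.
Proof.
move=> iE [a [u [ha [em ey]]]] [a' [u' [ha' [em' ey']]]].
have [s [t [e ne]]] := ol ha ha'.
have hu : forall i, s * u i = t * u' i.
  apply: (indep_eq iE).
  under eq_bigr do rewrite -scalerA. under [RHS]eq_bigr do rewrite -scalerA.
  by rewrite -!scaler_sumr -em -em' !scalerA e.
apply/matrixP => i j; rewrite (ord1 i).
apply: (dom_cancel_l hdom ne).
by rewrite -mulrA ey mulrA hu -mulrA -ey' mulrA -e.
Qed.
End G.

Lemma embed : fg_module M -> exists d (f : M -> 'rV[R]_d),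
  linT f /\ (forall x y, f x = f y -> x = y).
Proof.
case=> s hs.
have [E [iE hE]] := indep_step s.
have [AU hAU] : exists AU : 'I_(size s) -> R * ('I_(size E) -> R), forall k,
    (AU k).1 != 0 /\ (AU k).1 *: s`_k = \sum_(i < size E) (AU k).2 i *: E`_i.
  apply: (@choice_fun _ _ (fun (k : 'I_(size s)) (au : R * ('I_(size E) -> R)) =>
    au.1 != 0 /\ au.1 *: s`_k = \sum_(i < size E) au.2 i *: E`_i)) => k.
  have [a [u [ha e]]] := hE _ (mem_nth 0 (ltn_ord k)).
  by exists (a, u).
have [c [hc hw]] := rcm (X := prod 'I_(size s) 'I_(size E))
  (A := fun x => (AU x.1).1) (fun x => (AU x.1).2 x.2) (fun x => proj1 (hAU x.1)).
have [W hW] := choice_fun hw.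
pose w k : 'rV[R]_(size E) := \row_i W (k, i).
have Gk (k : 'I_(size s)) : Good E c s`_k (w k).
  exists (AU k).1, (AU k).2; split; first by case: (hAU k).
  split; first by case: (hAU k).
  by move=> i; rewrite mxE (hW (k, i)).
have Gall m : exists y, Good E c m y.
  have [c' ->] := (hs m).1 isT.
  exists (\sum_(k < size s) c' k *: w k).
  elim/big_rec2: _ => [|k y1 y2 _ G]; first exact: Good0.
  exact: GoodD (GoodZ _ (Gk k)) G.
have [f hf] := choice_fun Gall.
exists (size E), f; split.
  move=> a x y; apply: (Good_uniq iE (hf _)).
  exact: GoodD (GoodZ _ (hf x)) (hf y).
move=> x y e.
have := GoodD (hf x) (GoodZ (-1) (hf y)).
rewrite e !scaleN1r subrr => -[a [u [ha [em ey]]]].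
have u0 i : u i = 0.
  have := ey i; rewrite mxE mulr0 => /esym /hdom [] // /eqP; by rewrite (negbTE hc).
move: em; rewrite big1 => [em|i _]; last by rewrite u0 scale0r.
by apply/eqP; rewrite -subr_eq0; apply/eqP; apply: htf em.
Qed.
End Emb.


Section SubMod.
Variables (R : nzRingType) (M : lmodType R) (S : {pred M}) (hS : is_submod S).

Definition SubT : Type := (fun _ : is_submod S => {x : M | x \in S}) hS.
HB.instance Definition _ := [isSub of SubT for @proj1_sig M (fun x => x \in S)].
HB.instance Definition _ := [Choice of SubT by <:].

Let S0 : 0 \in S. Proof. by case: hS. Qed.
Let SD x y : x \in S -> y \in S -> x + y \in S. Proof. by case: hS => _ [H _]; apply: H. Qed.
Let SZ a x : x \in S -> a *: x \in S. Proof. by case: hS => _ [_ H]; apply: H. Qed.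

Definition t0 : SubT := exist _ 0 S0.
Definition tadd (x y : SubT) : SubT := exist _ (val x + val y) (SD (valP x) (valP y)).
Definition topp (x : SubT) : SubT := exist _ (- val x) (submodN hS (valP x)).
Definition tscale (a : R) (x : SubT) : SubT := exist _ (a *: val x) (SZ a (valP x)).

Lemma taddA : associative tadd.
Proof. by move=> x y z; apply: val_inj; rewrite /= addrA. Qed.
Lemma taddC : commutative tadd.
Proof. by move=> x y; apply: val_inj; rewrite /= addrC. Qed.
Lemma tadd0 : left_id t0 tadd.
Proof. by move=> x; apply: val_inj; rewrite /= add0r. Qed.
Lemma taddN : left_inverse t0 topp tadd.
Proof. by move=> x; apply: val_inj; rewrite /= addNr. Qed.

HB.instance Definition _ := GRing.isZmodule.Build SubT taddA taddC tadd0 taddN.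

Lemma tscaleA a b v : tscale a (tscale b v) = tscale (a * b) v.
Proof. by apply: val_inj; rewrite /= scalerA. Qed.
Lemma tscale1 : left_id 1 tscale.
Proof. by move=> x; apply: val_inj; rewrite /= scale1r. Qed.
Lemma tscaleDr : right_distributive tscale +%R.
Proof. by move=> a x y; apply: val_inj; rewrite /= scalerDr. Qed.
Lemma tscaleDl v : {morph tscale^~ v: a b / a + b}.
Proof. by move=> a b; apply: val_inj; rewrite /= scalerDl. Qed.

HB.instance Definition _ := GRing.Zmodule_isLmodule.Build R SubT tscaleA tscale1 tscaleDr tscaleDl.

Lemma val_sumT (I : Type) (r : seq I) (F : I -> SubT) :
  val (\sum_(i <- r) F i) = \sum_(i <- r) val (F i).
Proof. by elim/big_rec2: _ => // i y1 y2 _ <-. Qed.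
Lemma val_scaleT a (x : SubT) : val (a *: x) = a *: val x.
Proof. by []. Qed.

End SubMod.


Lemma subSF (R : nzRingType) (M : lmodType R) (S : {pred M}) (hS : is_submod S) :
  torsion_free M -> fg_sub S ->
  (forall M' : lmodType R, fg_module M' -> torsion_free M' -> stably_free M') ->
  stably_free_sub S.
Proof.
move=> htf [s hs] C2.
have sS k : (k < size s)%N -> s`_k \in S.
  move=> lt; apply/hs; exists (fun j : 'I_(size s) => ((j : nat) == k)%:R).
  rewrite (bigD1 (Ordinal lt)) //= eqxx scale1r big1 ?addr0 //.
  move=> j /eqP ne; rewrite (_ : ((j : nat) == k) = false) ?scale0r //.
  by apply/eqP => e; apply: ne; apply: val_inj.
pose T := SubT hS.
have S0 : 0 \in S by case: (hS).
have e0 : insubd (t0 hS) 0 = (0 : T) by apply: val_inj; rewrite insubdK.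
have tfT : torsion_free T.
  move=> a x ha /(congr1 val); rewrite val_scaleT /= => /(htf _ _ ha) x0.
  by apply: val_inj; rewrite /= -[LHS]/(sval x) x0.
have fgT : fg_module T.
  pose sT := map (insubd (t0 hS)) s.
  have es : size sT = size s by rewrite size_map.
  have nT i : (i < size s)%N -> val (sT`_i) = s`_i.
    by move=> lt; rewrite -e0 (nth_map 0) // insubdK // sS.
  exists sT => x; split => // _.
  have [c ec] := (hs (val x)).1 (valP x).
  exists (fun i => c (cast_ord es i)); apply: val_inj.
  rewrite val_sumT ec -(sum_cast es (fun j => c j *: s`_j)).
  apply: eq_bigr => i _; rewrite val_scaleT nT //; rewrite -es; exact: ltn_ord.
have := SF_SFg (C2 T fgT tfT) => sfT.
apply: SFg_SF; apply: (SFg_transport (g := insubd (t0 hS)) _ _ _ _ sfT).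
- move=> a x y xS yS; apply: val_inj; rewrite insubdK; last by case: (hS) => _ [H1 H2]; apply: H1 => //; apply: H2.
  by rewrite /= !insubdK.
- by [].
- by move=> x y xS yS /(congr1 val); rewrite !insubdK.
- move=> y _; exists (val y); split; first exact: valP.
  by apply: val_inj; rewrite insubdK //; apply: valP.
Qed.


Lemma C3toC2 (R : nzRingType) : is_domain R -> ore_l R -> ore_r R ->
  (forall I : {pred R^o}, is_left_ideal I -> stably_free_sub I) ->
  forall M : lmodType R, fg_module M -> torsion_free M -> stably_free M.
Proof.
move=> hdom ol or H M fgM tfM.
have [d [f [lf injf]]] := embed hdom ol or tfM fgM.
pose S' : {pred 'rV[R]_d} := [pred y | pb (exists x, f x = y)].
have S'P y : y \in S' <-> exists x, f x = y by rewrite inE; apply: pbP.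
have hS' : is_submod S'.
  split; first by apply/S'P; exists 0; apply: linT0.
  split; first by move=> x y /S'P [u <-] /S'P [v <-]; apply/S'P; exists (u + v); apply: linTD.
  by move=> a x /S'P [u <-]; apply/S'P; exists (a *: u); apply: linTZ.
have := rV_SF (fun I hI => SF_SFg (H I hI)) hS' => sf.
apply: SFg_SF; apply: (SFg_transport (g := f) _ _ _ _ sf).
- exact: linT_S.
- by move=> x _; apply/S'P; exists x.
- by move=> x y _ _; apply: injf.
- by move=> y /S'P [x <-]; exists x.
Qed.

Theorem mainTheorem1 (R : nzRingType)
  (hdom : is_domain R) (hlN : left_noetherian R) (hrN : right_noetherian R) :
  let C1 := (forall I : {pred R^o}, is_left_ideal I -> stably_free_sub I) /\
            (forall I : {pred (R^c)^o}, is_right_ideal I -> stably_free_sub I) in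
  let C2 := (forall M : lmodType R, fg_module M -> torsion_free M -> stably_free M) /\
            (forall M : lmodType R^c, fg_module M -> torsion_free M -> stably_free M) in
  let C3 := (forall I : {pred R^o}, is_left_ideal I -> fg_sub I -> stably_free_sub I) /\
            (forall I : {pred (R^c)^o}, is_right_ideal I -> fg_sub I -> stably_free_sub I) in
  (C1 <-> C2) /\ (C2 <-> C3).
Proof.
cbv zeta.
have hdomc : is_domain R^c by move=> a b /hdom [] ->; [right|left].
have hlNc : left_noetherian R^c := hrN.
have ol : ore_l R := noeth_ore hdom hlN.
have olc : ore_l R^c := noeth_ore hdomc hlNc.
have or : ore_r R by move=> a b ha hb; have [u [v [e ne]]] := olc a b ha hb; exists u, v.
have orc : ore_r R^c by move=> a b ha hb; have [u [v [e ne]]] := ol a b ha hb; exists u, v.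
have tfo : torsion_free R^o.
  by move=> a m ha /hdom [] // /eqP; rewrite (negbTE ha).
have tfoc : torsion_free (R^c)^o.
  by move=> a m ha /hdomc [] // /eqP; rewrite (negbTE ha).
have c32 : (forall I : {pred R^o}, is_left_ideal I -> fg_sub I -> stably_free_sub I) /\
            (forall I : {pred (R^c)^o}, is_right_ideal I -> fg_sub I -> stably_free_sub I) ->
  (forall M : lmodType R, fg_module M -> torsion_free M -> stably_free M) /\
            (forall M : lmodType R^c, fg_module M -> torsion_free M -> stably_free M).
  case=> h3l h3r; split.
    exact: (C3toC2 hdom ol or (fun I hI => h3l I hI (hlN I hI))).
  exact: (C3toC2 hdomc olc orc (fun I hI => h3r I hI (hrN I hI))).
have c23 : (forall M : lmodType R, fg_module M -> torsion_free M -> stably_free M) /\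
            (forall M : lmodType R^c, fg_module M -> torsion_free M -> stably_free M) ->
  (forall I : {pred R^o}, is_left_ideal I -> fg_sub I -> stably_free_sub I) /\
            (forall I : {pred (R^c)^o}, is_right_ideal I -> fg_sub I -> stably_free_sub I).
  case=> h2l h2r; split => I hI hfg.
    exact: (subSF hI tfo hfg h2l).
  exact: (subSF hI tfoc hfg h2r).
split; split.
- case=> h1l h1r; apply: c32; split => I hI _; [exact: h1l | exact: h1r].
- move=> /c23 [h3l h3r]; split => I hI; [exact: h3l I hI (hlN I hI) | exact: h3r I hI (hrN I hI)].
- exact: c23.
- exact: c32.
Qed.
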